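(* Let $U\subset\operatorname{int}(\mathbb{R}^k_+)$ be a compact set containing a nonempty open set, and let $\lambda_0>1$ be defined by $\ln\lambda_0=\max_{x,y\in U}d_T(x,y)$. Let $f\colon\operatorname{int}(\mathbb{R}^k_+)\to\operatorname{int}(\mathbb{R}^k_+)$ be monotonic ($x\le y\Rightarrow f(x)\le f(y)$). If there exists $c\in[0,1)$ such that $f(\lambda x)\le\lambda^c f(x)$ for all $x\in U$ and all $\lambda\in(1,\lambda_0]$, then $d_T(f(x),f(y))\le c\,d_T(x,y)$ for all $x,y\in U$.
   Context: $\operatorname{int}(\mathbb{R}^k_+)$ is the set of vectors in $\mathbb{R}^k$ with strictly positive coordinates; $x\le y$ means $y-x$ has nonnegative coordinates. Thompson's metric: $d_T(x,y)=\ln\max\{M(x,y),M(y,x)\}$ with $M(x,y)=\inf\{\beta>0: x\le\beta y\}$. Compactness and openness refer to the usual topology of $\mathbb{R}^k$ (equivalently, for compactness, to the topology of $d_T$). *)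

(* Defs.v *)
From HB Require Import structures.
From mathcomp Require Import all_boot all_order all_algebra.
From mathcomp Require Import all_classical all_reals all_analysis.
Set Implicit Arguments. Unset Strict Implicit. Unset Printing Implicit Defensive.
Import Order.TTheory GRing.Theory Num.Theory.
Import numFieldNormedType.Exports.
Local Open Scope classical_set_scope.
Local Open Scope ring_scope.

Definition posint {R : realType} {k : nat} : set 'rV[R]_k :=
  [set x | forall i : 'I_k, 0 < x ord0 i].

Definition vle {R : realType} {k : nat} (x y : 'rV[R]_k) : Prop :=
  forall i : 'I_k, x ord0 i <= y ord0 i.

Definition Mth {R : realType} {k : nat} (x y : 'rV[R]_k) : R :=
  inf [set beta : R | 0 < beta /\ vle x (beta *: y)].

Definition dT {R : realType} {k : nat} (x y : 'rV[R]_k) : R :=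
  ln (Num.max (Mth x y) (Mth y x)).

(* Main.v *)
Require Import Defs.
From HB Require Import structures.
From mathcomp Require Import all_boot all_order all_algebra.
From mathcomp Require Import all_classical all_reals all_analysis.
From mathcomp Require Import lra.
Import Order.TTheory GRing.Theory Num.Theory.
Import numFieldNormedType.Exports.
Local Open Scope classical_set_scope.
Local Open Scope ring_scope.

Section S.
Context {R : realType} {k : nat}.
Implicit Types x y : 'rV[R]_k.

Lemma Mset_lb x y : has_lbound [set beta : R | 0 < beta /\ vle x (beta *: y)].
Proof. by exists 0 => b [/ltW]. Qed.

Lemma Mset_ne x y : posint x -> posint y ->
  [set beta : R | 0 < beta /\ vle x (beta *: y)] !=set0.
Proof.
move=> px py; exists (\sum_i (x ord0 i / y ord0 i) + 1); split.
  by rewrite ltr_wpDl // sumr_ge0 // => i _; rewrite divr_ge0 // ltW.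
move=> i; rewrite mxE -ler_pdivrMr ?py //.
rewrite (bigD1 i) //= -addrA ler_wpDr // addr_ge0 //.
by rewrite sumr_ge0 // => j _; rewrite divr_ge0 // ltW.
Qed.

Lemma Mth_ge0 x y : posint x -> posint y -> 0 <= Mth x y.
Proof. move=> px py; rewrite /Mth. by apply: (lb_le_inf (Mset_ne x y px py)) => b [/ltW]. Qed.

Lemma Mth_ub x y b : 0 < b -> vle x (b *: y) -> Mth x y <= b.
Proof. by move=> b0 h; rewrite /Mth; apply: (ge_inf (Mset_lb x y)). Qed.

Lemma Mth_vle x y : posint x -> posint y -> vle x (Mth x y *: y).
Proof.
move=> px py i; rewrite mxE -ler_pdivrMr ?py //.
rewrite /Mth; apply: (lb_le_inf (Mset_ne x y px py)) => b [_ /(_ i)].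
by rewrite mxE -ler_pdivrMr ?py.
Qed.

Lemma Mth_self_le1 x : Mth x x <= 1.
Proof. by apply: Mth_ub => //; move=> i; rewrite scale1r. Qed.

Lemma dT_self_le0 x : posint x -> dT x x <= 0.
Proof.
move=> px; rewrite /dT; apply: ln_le0.
by rewrite ge_max Mth_self_le1.
Qed.

Lemma dT_self x : (0 < k)%N -> posint x -> dT x x = 0.
Proof.
move=> kp px; rewrite /dT.
have -> : Mth x x = 1.
  apply/le_anti; rewrite Mth_self_le1 /=.
  rewrite /Mth; apply: (lb_le_inf (Mset_ne x x px px)) => b [_ /(_ (Ordinal kp))].
  rewrite mxE -{1}(mul1r (x ord0 _)) ler_pM2r //.
by rewrite maxxx ln1.
Qed.

Lemma vle_trans x y z : vle x y -> vle y z -> vle x z.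
Proof. by move=> h1 h2 i; apply: le_trans (h1 i) (h2 i). Qed.

End S.

Theorem corollary3 (R : realType) (k : nat) (U : set 'rV[R]_k)
  (f : 'rV[R]_k -> 'rV[R]_k) (lam0 c : R) :
  U `<=` posint ->
  compact U ->
  (exists V : set 'rV[R]_k, open V /\ V !=set0 /\ V `<=` U) ->
  (exists x0 y0, U x0 /\ U y0 /\ ln lam0 = dT x0 y0) ->
  (forall x y, U x -> U y -> dT x y <= ln lam0) ->
  (forall x, posint x -> posint (f x)) ->
  (forall x y, posint x -> posint y -> vle x y -> vle (f x) (f y)) ->
  0 <= c -> c < 1 ->
  (forall x (lam : R), U x -> 1 < lam -> lam <= lam0 ->
     vle (f (lam *: x)) (lam `^ c *: f x)) ->
  forall x y, U x -> U y -> dT (f x) (f y) <= c * dT x y.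
Proof.
move=> sU _ _ _ hle pf mono c0 c1 hom x y Ux Uy.
have px := sU x Ux; have py := sU y Uy.
have [k0|kp] := posnP k.
  have E : forall u v : 'rV[R]_k, u = v.
    by move=> u v; apply/matrixP => i [j hj]; exfalso; move: hj; rewrite k0.
  rewrite (E (f y) x) (E (f x) x) (E y x).
  have := dT_self_le0 x px; set d := dT x x => hd.
  have : 0 <= (1 - c) * (- d) by rewrite mulr_ge0 // ?subr_ge0 ?oppr_ge0 // ltW.
  lra.
set mu := Num.max (Mth x y) (Mth y x).
have mxy : vle x (mu *: y).
  move=> i; apply: le_trans (Mth_vle x y px py i) _; rewrite !mxE ler_pM2r ?py //.
  by rewrite le_max lexx.
have myx : vle y (mu *: x).
  move=> i; apply: le_trans (Mth_vle y x py px i) _; rewrite !mxE ler_pM2r ?px //.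
  by rewrite le_max lexx orbT.
have [mu1|mu1] := leP mu 1.
  have exy : x = y.
    apply/matrixP => i j; rewrite [i]ord1; apply/le_anti/andP; split.
      by apply: le_trans (mxy j) _; rewrite mxE ler_piMl // ltW ?py.
    by apply: le_trans (myx j) _; rewrite mxE ler_piMl // ltW ?px.
  by subst y; rewrite (dT_self (f x) kp (pf x px)) (dT_self x kp px) mulr0.
have mu0 : 0 < mu by apply: lt_trans mu1.
have hdxy : dT x y = ln mu by [].
have lnmu : 0 < ln mu by apply: ln_gt0.
have mul0 : mu <= lam0.
  have := hle x y Ux Uy; rewrite hdxy.
  have [l0|l0] := leP lam0 0.
    by rewrite (ln0 l0) => h; have := lt_le_trans lnmu h; rewrite ltxx.
  by rewrite ler_ln ?posrE.
have pscale : forall z : 'rV[R]_k, posint z -> posint (mu *: z).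
  by move=> z pz i; rewrite !mxE mulr_gt0.
have fxy : vle (f x) (mu `^ c *: f y).
  apply: vle_trans (mono _ _ px (pscale _ py) mxy) (hom _ _ Uy mu1 mul0).
have fyx : vle (f y) (mu `^ c *: f x).
  apply: vle_trans (mono _ _ py (pscale _ px) myx) (hom _ _ Ux mu1 mul0).
have pc : 0 < mu `^ c by apply: powR_gt0.
have hM : Num.max (Mth (f x) (f y)) (Mth (f y) (f x)) <= mu `^ c.
  by rewrite ge_max !Mth_ub.
rewrite hdxy /dT.
set M := Num.max _ _ in hM *.
have [M0|M0] := leP M 0.
  by rewrite (ln0 M0) mulr_ge0 // ltW.
by rewrite -ln_powR ler_ln ?posrE.
Qed.
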